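(* Let $\pi$ be a permutation-invariant probability density on $\mathbb{X}^n$ and $q$ a probability density on $\mathbb{X}$. For every $x\in\mathbb{X}^n$, $A^{\mathrm{SOMA}}(x)\ge A^{\mathrm{RAN}}(x)$, where $$A^{\mathrm{SOMA}}(x)=\int_{\mathbb{X}}q(y)\sum_{i=1}^n\frac{w_i(y,x)}{W(y,x)}\alpha_i^{\mathrm{SOMA}}(y,x)\,dy,\qquad A^{\mathrm{RAN}}(x)=\int_{\mathbb{X}}q(y)\sum_{i=1}^n\frac1n\alpha_i^{\mathrm{IMwG}}(y,x)\,dy.$$
   Context: Permutation invariance: $\pi(x_{\sigma(1)},\dots,x_{\sigma(n)})=\pi(x)$ for all permutations $\sigma$. $[x_{-i},y]$ is $x$ with its $i$-th component replaced by $y$. Weights: $w_i(y,x)=\pi([x_{-i},y])/\big(q(y)\prod_{j\ne i}q(x_j)\big)$ ($1\le i\le n$), $w_0(y,x)=\pi(x)/\prod_j q(x_j)$, $W=\sum_{i=1}^n w_i$ (well-defined, positive). $\alpha_i^{\mathrm{SOMA}}(y,x)=\min\{1,W/(W+w_0-w_i)\}$, $\alpha_i^{\mathrm{IMwG}}(y,x)=\min\{1,w_i/w_0\}$. $A^{\mathrm{SOMA}}(x)$ and $A^{\mathrm{RAN}}(x)$ are the probabilities of accepting a move from $x$ under the SOMA sampler and the random-scan independent-Metropolis-within-Gibbs sampler, respectively. *)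

(* Defs.v *)
From HB Require Import structures.
From mathcomp Require Import all_boot all_order all_algebra all_fingroup.
From mathcomp Require Import all_classical all_reals all_analysis.
Set Implicit Arguments. Unset Strict Implicit. Unset Printing Implicit Defensive.
Import Order.TTheory GRing.Theory Num.Theory.
Local Open Scope ring_scope.

Section SOMA.
Context {d : measure_display} {T : measurableType d} {R : realType} {n : nat}.

Definition upd (x : 'I_n -> T) (i : 'I_n) (y : T) : 'I_n -> T :=
  fun j => if j == i then y else x j.

Definition perm_invariant (pi : ('I_n -> T) -> R) : Prop :=
  forall (s : 'S_n) (x : 'I_n -> T), pi (fun j => x (s j)) = pi x.

Variables (pi : ('I_n -> T) -> R) (q : T -> R).

Definition wi (i : 'I_n) (y : T) (x : 'I_n -> T) : R :=
  pi (upd x i y) / (q y * \prod_(j < n | j != i) q (x j)).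

Definition w0 (x : 'I_n -> T) : R := pi x / \prod_(j < n) q (x j).

Definition Wsum (y : T) (x : 'I_n -> T) : R := \sum_(i < n) wi i y x.

Definition alpha_SOMA (i : 'I_n) (y : T) (x : 'I_n -> T) : R :=
  Num.min 1 (Wsum y x / (Wsum y x + w0 x - wi i y x)).

Definition alpha_IMwG (i : 'I_n) (y : T) (x : 'I_n -> T) : R :=
  Num.min 1 (wi i y x / w0 x).

Variable (mu : {measure set T -> \bar R}).

Definition A_SOMA (x : 'I_n -> T) : \bar R :=
  (\int[mu]_y (q y * \sum_(i < n) (wi i y x / Wsum y x) * alpha_SOMA i y x)%:E)%E.

Definition A_RAN (x : 'I_n -> T) : \bar R :=
  (\int[mu]_y (q y * \sum_(i < n) n%:R^-1 * alpha_IMwG i y x)%:E)%E.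

End SOMA.

(* Main.v *)
Require Import Defs.
From HB Require Import structures.
From mathcomp Require Import all_boot all_order all_algebra all_fingroup.
From mathcomp Require Import all_classical all_reals all_analysis.
From mathcomp Require Import lra.
Import Order.TTheory GRing.Theory Num.Theory.
Local Open Scope ring_scope.

Lemma key (R : realType) n (w : 'I_n -> R) w0 : 0 < w0 ->
  (forall i, 0 <= w i) -> 0 < \sum_(i < n) w i ->
  \sum_(i < n) n%:R^-1 * Num.min 1 (w i / w0) <=
  \sum_(i < n) (w i / (\sum_(j < n) w j)) *
     Num.min 1 ((\sum_(j < n) w j) / ((\sum_(j < n) w j) + w0 - w i)).
Proof.
move=> w0p wge0 Wp.
set W := \sum_(j < n) w j.
set S := \sum_(j < n) Num.min w0 (w j).
have hSW : S <= W by apply: ler_sum => i _; rewrite ge_min lexx orbT.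
have hSn : S <= n%:R * w0.
  rewrite mulr_natl -[n in w0 *+ n]card_ord -sumr_const.
  by apply: ler_sum => i _; rewrite ge_min lexx.
set E := W + n%:R * w0 - S.
have Ep : 0 < E.
  rewrite /E -addrA; apply: ltr_wpDr => //; rewrite subr_ge0 //.
have hwi i : w i <= W.
  by rewrite /W (bigD1 i) //= lerDl sumr_ge0.
have hmi i : w0 - Num.min w0 (w i) <= n%:R * w0 - S.
  have -> : n%:R * w0 - S = \sum_(j < n) (w0 - Num.min w0 (w j)).
    by rewrite sumrB sumr_const card_ord mulr_natl.
  by rewrite (bigD1 i) //= lerDl sumr_ge0 // => j _; rewrite subr_ge0 ge_min lexx.
apply: (@le_trans _ _ (\sum_(i < n) w i / E)).
  rewrite -mulr_suml -/W.
  have -> : \sum_(i < n) n%:R^-1 * Num.min 1 (w i / w0) = n%:R^-1 * S / w0.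
    rewrite -mulrA /S mulr_suml mulr_sumr; apply: eq_bigr => i _; congr (_ * _).
    have [h|h] := leP w0 (w i).
      by rewrite divff ?gt_eqF // min_l // ler_pdivlMr // mul1r.
    by rewrite min_r // ler_pdivrMr // mul1r ltW.
  case: n w wge0 Wp @W @S hSW hSn @E Ep hwi hmi => [|n] w wge0 Wp W S hSW hSn E Ep hwi hmi.
    by rewrite invr0 !mul0r divr_ge0 // ltW.
  have np : 0 < n.+1%:R :> R by rewrite ltr0n.
  rewrite ler_pdivrMr // mulrC ler_pdivrMr // [W / E * w0]mulrAC [W * w0 / E * _]mulrAC ler_pdivlMr //.
  rewrite /E.
  have h0 : 0 <= (n.+1%:R * w0 - S) * (W - S) by apply: mulr_ge0; lra.
  nra.
apply: ler_sum => i _.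
have Dp : 0 < W + w0 - w i by have := hwi i; lra.
have hmw : Num.min w0 (w i) <= w i by rewrite ge_min lexx orbT.
have [h|h] := leP 1 (W / (W + w0 - w i)).
  rewrite mulr1 ler_wpM2l // lef_pV2 ?posrE //.
  rewrite /E; lra.

rewrite mulrA divfK ?gt_eqF // ler_wpM2l // lef_pV2 ?posrE //.
rewrite /E; have := hmi i; lra.
Qed.
Theorem theorem4 (d : measure_display) (T : measurableType d) (R : realType)
  (mu : {measure set T -> \bar R}) (n : nat)
  (pi : ('I_n -> T) -> R) (q : T -> R)
  (* pi : nonnegative, permutation invariant, measurable in each coordinate *)
  (pi_ge0 : forall x, 0 <= pi x)
  (pi_perm : perm_invariant pi)
  (pi_meas : forall (x : 'I_n -> T) (i : 'I_n),
      measurable_fun setT (fun y => pi (upd x i y)))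
  (* q : probability density on T w.r.t. mu *)
  (q_ge0 : forall y, 0 <= q y)
  (q_meas : measurable_fun setT q)
  (q_int1 : (\int[mu]_y (q y)%:E = 1)%E)
  (x : 'I_n -> T)
  (* the weights are well-defined and positive at x *)
  (qx_gt0 : forall j, 0 < q (x j))
  (w0_gt0 : 0 < w0 pi q x)
  (W_gt0 : forall y, 0 < q y -> 0 < Wsum pi q y x) :
  (A_RAN pi q mu x <= A_SOMA pi q mu x)%E.
Proof.
have hw i y : 0 <= wi pi q i y x.
  apply: divr_ge0 => //; apply: mulr_ge0 => //; exact: prodr_ge0.
have f1ge0 y : 0 <= q y * \sum_(i < n) n%:R^-1 * alpha_IMwG pi q i y x.
  apply: mulr_ge0 => //; apply: sumr_ge0 => i _; apply: mulr_ge0.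
    by rewrite invr_ge0.
  by rewrite /alpha_IMwG le_min ler01 divr_ge0 // ltW.
have pw y : q y * \sum_(i < n) n%:R^-1 * alpha_IMwG pi q i y x <=
    q y * \sum_(i < n) (wi pi q i y x / Wsum pi q y x) * alpha_SOMA pi q i y x.
  have [q0|qp] := eqVneq (q y) 0; first by rewrite q0 !mul0r.
  have qp' : 0 < q y by rewrite lt_def qp q_ge0.
  apply: ler_wpM2l => //; rewrite /alpha_IMwG /alpha_SOMA /Wsum.
  have K := @key R n (fun i => wi pi q i y x) (w0 pi q x) w0_gt0 (hw^~ y) (W_gt0 _ qp'). exact: K.
rewrite /A_RAN /A_SOMA.
rewrite ge0_integralTE; last by move=> y; rewrite lee_fin.
rewrite ge0_integralTE; last by move=> y; rewrite lee_fin (le_trans (f1ge0 y) (pw y)).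
apply: ge_ereal_sup => _ [h /= hle <-]; apply: ereal_sup_ubound => /=.
exists h => // z; apply: (le_trans (hle z)); rewrite lee_fin; exact: pw.
Qed.
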